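(* Let $F$ be an algebraically closed field, $l>1$ an integer coprime to the characteristic of $F$, $\xi\in F$ a primitive $l$-th root of $1$, $m\ge1$, and $$Clg(l,m)=\langle x_1,\ldots,x_m \mid x_i^l=1;\ x_i^{-1}x_jx_i=\xi x_j \ (i<j);\ x_i^{-1}x_jx_i=\xi^{-1}x_j \ (i>j)\rangle.$$ Let $V$ be a subspace of $Clg(l,m)$ that is invariant under every automorphism of $Clg(l,m)$. Then $V$ is spanned by the ordered monomials $x_1^{k_1}\cdots x_m^{k_m}$ ($0\le k_i\le l-1$) that lie in $V$.
   Context: The ordered monomials $x_1^{k_1}x_2^{k_2}\cdots x_m^{k_m}$ with $0\le k_i\le l-1$ are the standard monomials of $Clg(l,m)$ (they form a basis of it). *)

(* Defs.v *)
From HB Require Import structures.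
From mathcomp Require Import all_boot all_order all_algebra.
Set Implicit Arguments. Unset Strict Implicit. Unset Printing Implicit Defensive.
Import GRing.Theory.
Local Open Scope ring_scope.

(* Concrete model of the generalized Clifford algebra Clg(l,m) over F, with
   respect to the (standard) basis of ordered monomials x^a = x_1^a_1...x_m^a_m,
   a : 'I_m -> 'Z_l (exponents mod l).  In Clg(l,m) the defining relations give
   x_i x_j = xi x_j x_i for j < i, hence
     x^a * x^b = xi ^ (sum_{j < i} a_i b_j) * x^(a+b).                       *)

Section Clg.
Variables (F : fieldType) (l m : nat) (xi : F).

Definition clg_expo := {ffun 'I_m -> 'Z_l}.

Definition clg := {ffun clg_expo -> F^o}.

Definition clg_beta (a b : clg_expo) : nat :=
  (\sum_(i < m) \sum_(j < m | (j < i)%N) (a i : nat) * (b j : nat))%N.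

Definition clg_basis (a : clg_expo) : clg := [ffun c => (c == a)%:R].

Definition clg_mul (u v : clg) : clg :=
  \sum_(a : clg_expo) \sum_(b : clg_expo)
     (u a * v b * xi ^+ clg_beta a b) *: clg_basis [ffun i => a i + b i].

Definition clg_one : clg := clg_basis [ffun=> 0].

Definition clg_gen (i : 'I_m) : clg := clg_basis [ffun j => (j == i)%:R].

Definition clg_exp (u : clg) (n : nat) : clg := iter n (clg_mul u) clg_one.

Definition clg_mono (k : clg_expo) : clg :=
  \big[clg_mul/clg_one]_(i < m) clg_exp (clg_gen i) (k i).

Definition clg_aut (f : 'End(clg)) : Prop :=
  [/\ bijective f, f clg_one = clg_one &
      forall u v, f (clg_mul u v) = clg_mul (f u) (f v)].

End Clg.

(* Main.v *)
Require Import Defs.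
From HB Require Import structures.
From mathcomp Require Import all_boot all_order all_algebra.
From mathcomp Require Import ring zify.
Import GRing.Theory.
Local Open Scope ring_scope.
Set Implicit Arguments. Unset Strict Implicit.

Section S.
Variables (F : fieldType) (n m : nat) (xi : F).
Hypothesis hxi : (n.+2).-primitive_root xi.
Local Notation l := n.+2.
Local Notation clg := (clg F l m).
Local Notation E := (clg_expo l m).

Lemma basisE (a c : E) : clg_basis F a c = (c == a)%:R.
Proof. by rewrite ffunE. Qed.

Lemma mul_basis (a b : E) :
  clg_mul xi (clg_basis F a) (clg_basis F b) =
  xi ^+ clg_beta a b *: clg_basis F [ffun i => a i + b i].
Proof.
rewrite /clg_mul (bigD1 a) //= [X in _ + X]big1 => [|a' na'].
  rewrite addr0 (bigD1 b) //= [X in _ + X]big1 => [|b' nb'].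
    by rewrite addr0 !basisE !eqxx !mul1r.
  by rewrite !basisE (negbTE nb') mulr0 mul0r scale0r.
rewrite big1 // => b' _.
by rewrite !basisE (negbTE na') !mul0r scale0r.
Qed.

Lemma beta0 (a b : E) :
  (forall i j : 'I_m, (j < i)%N -> (a i : nat) = 0%N \/ (b j : nat) = 0%N) ->
  clg_beta a b = 0%N.
Proof.
move=> H; rewrite /clg_beta big1 // => i _; rewrite big1 // => j ji.
by case: (H i j ji) => ->; rewrite ?muln0.
Qed.

Lemma exp_gen (i : 'I_m) k :
  clg_exp xi (clg_gen F l i) k = clg_basis F [ffun j => if j == i then k%:R else 0].
Proof.
elim: k => [|k IH].
  rewrite /clg_exp /= /clg_one; congr clg_basis; apply/ffunP => j.
  by rewrite !ffunE; case: ifP.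
rewrite [clg_exp _ _ _]/= -/(clg_exp xi (clg_gen F l i) k) IH /clg_gen mul_basis.
rewrite beta0 ?expr0 ?scale1r.
  congr clg_basis; apply/ffunP => j; rewrite !ffunE.
  by case: eqP => _; rewrite ?addr0 // -mulrS.
move=> i' j ji; rewrite !ffunE.
case: (eqVneq i' i) => [ei|ne]; last by left.
right; case: (eqVneq j i) => [ej|//].
by move: ji; rewrite ei ej ltnn.
Qed.

End S.
Section S2.
Variables (F : fieldType) (n : nat) (xi : F).
Local Notation l := n.+2.
Lemma mono_basis m' (k : clg_expo l m'.+1) : clg_mono xi k = clg_basis F k.
Proof.
pose G (j : nat) := clg_exp xi (clg_gen F l (inord j : 'I_m'.+1)) (k (inord j)).
have -> : clg_mono xi k = \big[clg_mul xi/clg_one F l m'.+1]_(0 <= i < m'.+1) G i.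
  rewrite big_mkord; apply: eq_bigr => i _; by rewrite /G inord_val.
suff H : forall d j, (j + d = m'.+1)%N ->
   \big[clg_mul xi/clg_one F l m'.+1]_(j <= i < m'.+1) G i =
   clg_basis F [ffun x : 'I_m'.+1 => if (j <= x)%N then k x else 0].
  rewrite (H m'.+1 0%N) //; congr clg_basis; apply/ffunP => x; by rewrite ffunE.
elim=> [|d IH] j hj.
  rewrite addn0 in hj; subst j; rewrite big_geq // /clg_one; congr clg_basis.
  by apply/ffunP => x; rewrite !ffunE leqNgt ltn_ord.
have jm : (j < m'.+1)%N by rewrite -hj; lia.
rewrite big_ltn // IH; last by lia.
rewrite /G exp_gen mul_basis beta0 ?expr0 ?scale1r.
  congr clg_basis; apply/ffunP => x; rewrite !ffunE.
  case: (eqVneq x (inord j)) => [->|ne].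
    by rewrite inordK // ltnn leqnn addr0 natr_Zp.
  have xj : (val x != j) by apply: contra ne => /eqP <-; rewrite inord_val.
  rewrite add0r; case: ltngtP xj => //.
move=> i' j' ji; rewrite !ffunE.
case: (eqVneq i' (inord j)) => [ei|ne]; last by left.
right; case: ifP => // hh; exfalso.
move: ji; rewrite ei inordK //; lia.
Qed.

End S2.

Section S3.
Variables (F : fieldType) (n m : nat) (xi : F).
Hypothesis hxi : (n.+2).-primitive_root xi.
Local Notation l := n.+2.
Local Notation clg := (clg F l m).
Local Notation E := (clg_expo l m).

Definition wt (t a : E) : F := \prod_(i < m) xi ^+ (t i * a i)%N.

Lemma xi_neq0 : xi != 0.
Proof.
apply/negP => /eqP x0; move: (prim_expr_order hxi); rewrite x0 expr0n /=.
by move/eqP; rewrite eq_sym oner_eq0.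
Qed.

Lemma wt_neq0 t a : wt t a != 0.
Proof. by apply/prodf_neq0 => i _; apply: expf_neq0; exact: xi_neq0. Qed.

Lemma wt_add t (a b : E) : wt t [ffun i => a i + b i] = wt t a * wt t b.
Proof.
rewrite /wt -big_split; apply: eq_bigr => i _ /=; rewrite ffunE.
have -> : ((a i + b i)%R : nat) = ((a i + b i) %% l)%N by [].
by rewrite -(prim_expr_mod hxi) modnMmr (prim_expr_mod hxi) mulnDr exprD.
Qed.

Lemma wt_zero t : wt t [ffun=> 0] = 1.
Proof. by rewrite /wt big1 // => i _; rewrite ffunE muln0 expr0. Qed.

Definition sc (s : E -> F) (u : clg) : clg := [ffun a => s a * u a].

Lemma sc_lin s : linear (sc s).
Proof. move=> c u v; apply/ffunP => a; rewrite !ffunE mulrDr; congr (_ + _); exact: mulrCA. Qed.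

HB.instance Definition _ s := GRing.isLinear.Build F clg clg *:%R (sc s) (sc_lin s).

Lemma sc_basis s c a : sc s (c *: clg_basis F a) = (c * s a) *: clg_basis F a.
Proof.
apply/ffunP => b; rewrite !ffunE; case: eqP => [->|_]; last by rewrite !mulr0n !scaler0 mulr0.
by rewrite mulr1n; change (s a * (c * 1) = c * s a * 1); rewrite !mulr1 mulrC.
Qed.

Lemma aut_wt t : clg_aut xi (linfun (sc (wt t))).
Proof.
split.
- exists (linfun (sc (fun a => (wt t a)^-1))) => u; rewrite !lfunE /=;
  apply/ffunP => a; rewrite !ffunE mulrA ?mulVf ?mulfV ?mul1r //; exact: wt_neq0.
- rewrite lfunE /=; apply/ffunP => a; rewrite !ffunE.
  case: eqP => [->|_]; last by rewrite mulr0.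
  by rewrite wt_zero mul1r.
- move=> u v; rewrite !lfunE /=; apply/ffunP => c.
  rewrite /clg_mul ffunE !sum_ffunE mulr_sumr; apply: eq_bigr => a _.
  rewrite !sum_ffunE mulr_sumr; apply: eq_bigr => b _.
  rewrite !ffunE; case: eqP => [->|_]; last by rewrite !mulr0n !scaler0 !mulr0.
  rewrite wt_add; rewrite /GRing.scale /=; ring.
Qed.

Lemma geo (x y : 'Z_l) :
  \sum_(s : 'Z_l) (xi ^+ (s * x)%N)^-1 * xi ^+ (s * y)%N = if x == y then l%:R else 0.
Proof.
pose z := (xi ^+ x)^-1 * xi ^+ y.
have zE : forall s : 'Z_l, (xi ^+ (s * x)%N)^-1 * xi ^+ (s * y)%N = z ^+ s.
  by move=> s; rewrite /z exprMn exprVn -!exprM ![(_ * s)%N]mulnC.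
rewrite (eq_bigr _ (fun s _ => zE s)).
case: eqP => [exy|/eqP nxy].
  rewrite /z exy mulVf ?expf_neq0 ?xi_neq0 //.
  rewrite (eq_bigr (fun=> 1)) => [|s _]; last by rewrite expr1n.
  by rewrite sumr_const card_ord.
have z1 : z != 1.
  apply: contra nxy => /eqP zeq.
  have := congr1 (fun w => xi ^+ x * w) zeq.
  rewrite /= mulrA mulfV ?expf_neq0 ?xi_neq0 // mul1r mulr1 => /eqP. rewrite (eq_prim_root_expr hxi) !modn_small ?ltn_ord //.
  by move/eqP => e; apply/eqP/val_inj.
have zl : z ^+ l = 1.
  by rewrite /z exprMn exprVn -!exprM ![(_ * l)%N]mulnC !exprM (prim_expr_order hxi) !expr1n invr1 mulr1.
have := subrX1 z l; rewrite zl subrr => /esym/eqP; rewrite mulf_eq0 subr_eq0 (negbTE z1) /=.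
by move/eqP.
Qed.

Lemma orth (a b : E) :
  \sum_(t : E) (wt t a)^-1 * wt t b = if a == b then (l%:R) ^+ m else 0.
Proof.
have -> : \sum_(t : E) (wt t a)^-1 * wt t b =
   \sum_(t : E) \prod_(i < m) ((xi ^+ (t i * a i)%N)^-1 * xi ^+ (t i * b i)%N).
  by apply: eq_bigr => t _; rewrite /wt -prodfV -big_split.
rewrite -(bigA_distr_bigA (fun (i : 'I_m) (s : 'Z_l) => (xi ^+ (s * a i)%N)^-1 * xi ^+ (s * b i)%N)).
under eq_bigr => i _ do rewrite geo.
case: (eqVneq a b) => [<-|nab].
  by rewrite (eq_bigr (fun=> l%:R)) ?prodr_const ?card_ord // => i _; rewrite eqxx.
have [i ni] : exists i, a i != b i.
  apply/existsP; apply: contraR nab; rewrite negb_exists => /forallP H.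
  by apply/eqP/ffunP => i; apply/eqP; have := H i; rewrite negbK.
by rewrite (bigD1 i) //= (negbTE ni) mul0r.
Qed.

End S3.

Lemma decomp (F : fieldType) l m (v : clg F l m) :
  v = \sum_(a : clg_expo l m) v a *: clg_basis F a.
Proof.
apply/ffunP => b; rewrite sum_ffunE (bigD1 b) //= [X in _ + X]big1 => [|a nab].
  by rewrite addr0 !ffunE eqxx; rewrite /GRing.scale /= mulr1.
rewrite !ffunE; case: eqP => [e|_]; first by move: nab; rewrite e eqxx.
by rewrite /GRing.scale /= mulr0.
Qed.

Theorem lemma2 (F : closedFieldType) (l m : nat) (xi : F)
  (hl : (1 < l)%N) (hchar : [pchar F]^'.-nat l)
  (hxi : l.-primitive_root xi) (hm : (0 < m)%N)
  (V : {vspace clg F l m})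
  (hV : forall f : 'End(clg F l m), clg_aut xi f -> (f @: V <= V)%VS) :
  V = <<[seq clg_mono xi k | k <- enum (clg_expo l m) & clg_mono xi k \in V]>>%VS.
Proof.
case: m hm V hV => [//|m'] _ V hV.
case: l hl hchar hxi V hV => [|[|n]] // _ _ hxi V hV.
have inV : forall f : 'End(clg F n.+2 m'.+1), clg_aut xi f -> forall v, v \in V -> f v \in V.
  by move=> f af v vV; apply: (subvP (hV f af)); apply: memv_img.
have basis_in : forall v a, v \in V -> v a != 0 -> clg_basis F a \in V.
  move=> v a vV va.
  pose P := \sum_(t : clg_expo n.+2 m'.+1) (wt xi t a)^-1 *: (linfun (sc (wt xi t)) v).
  have PV : P \in V.
    by apply: memv_suml => t _; apply: memvZ; apply: inV => //; exact: (aut_wt hxi).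
  have PE : P = (v a * (n.+2)%:R ^+ m'.+1) *: clg_basis F a.
    apply/ffunP => b; rewrite /P sum_ffunE.
    under eq_bigr => t _ do rewrite ffunE lfunE /= ffunE.
    have -> : \sum_t (wt xi t a)^-1 *: ((wt xi t b * v b : F) : F^o) =
              v b * \sum_t ((wt xi t a)^-1 * wt xi t b).
      rewrite mulr_sumr; apply: eq_bigr => t _; rewrite /GRing.scale /=; ring.
    rewrite orth // ffunE ffunE; case: eqP => [->|nab].
      by rewrite eqxx /GRing.scale /= mulr1.
    case: eqP => [e|_]; first by exfalso; apply: nab; rewrite e.
    by rewrite /GRing.scale /= !mulr0.
  have nz : v a * (n.+2)%:R ^+ m'.+1 != 0.
    by rewrite mulf_neq0 // expf_neq0 // (prim_root_natf_neq0 hxi).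
  have -> : clg_basis F a = (v a * (n.+2)%:R ^+ m'.+1)^-1 *: P.
    by rewrite PE scalerA mulVf ?scale1r.
  exact: memvZ.
apply/eqP; rewrite eqEsubv; apply/andP; split.
  apply/subvP => v vV; rewrite (decomp v); apply: memv_suml => a _.
  case: (eqVneq (v a) 0) => [->|nz]; first by rewrite scale0r mem0v.
  apply: memvZ; rewrite -(mono_basis xi); apply: memv_span; apply/mapP; exists a => //.
  by rewrite mem_filter mem_enum andbT mono_basis; exact: basis_in vV nz.
apply/span_subvP => x /mapP [k]; rewrite mem_filter => /andP[kV _] ->.
exact: kV.
Qed.
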